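(* Consider a Fisher market with $n$ buyers and $m$ items, each item having supply $1$, in which every buyer values every item at $v_{ij}=1$. Buyer $i$ has a hard demand $d_i\ge 0$ and budget $B_i$. Assume there exists an allocation $x\ge 0$ with $\sum_i x_{ij}\le 1$ for all $j$ and $\sum_j x_{ij}-d_i>0$ for all $i$. Let $x$ be an optimal solution of $$\max_{x\ge 0}\sum_i B_i\log\Big(\sum_j x_{ij}-d_i\Big)\quad\text{s.t.}\quad \sum_i x_{ij}\le 1\ \ \forall j.$$ (i) If $B_i=1$ for all buyers $i$, then the difference $\sum_j x_{ij}-d_i$ is the same for all buyers $i$. (ii) If $B_i=d_i>0$ for all buyers $i$, then the ratio $\frac{\sum_j x_{ij}}{d_i}$ is the same for all buyers $i$. *)

(* Defs.v *)
From HB Require Import structures.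
From mathcomp Require Import all_boot all_order all_algebra.
From mathcomp Require Import reals exp.
Set Implicit Arguments. Unset Strict Implicit. Unset Printing Implicit Defensive.
Import Order.TTheory GRing.Theory Num.Theory.
Local Open Scope ring_scope.

(* Fisher market with n buyers, m items, unit supplies, all valuations v_ij = 1.
   An allocation is x : 'I_n -> 'I_m -> R, x i j = amount of item j to buyer i. *)

Definition feasible (R : realType) (n m : nat) (x : 'I_n -> 'I_m -> R) : Prop :=
  (forall i j, 0 <= x i j) /\ (forall j, \sum_(i < n) x i j <= 1).

Definition surplus (R : realType) (n m : nat) (x : 'I_n -> 'I_m -> R)
  (d : 'I_n -> R) (i : 'I_n) : R := \sum_(j < m) x i j - d i.

Definition objective (R : realType) (n m : nat) (B d : 'I_n -> R)
  (x : 'I_n -> 'I_m -> R) : R := \sum_(i < n) B i * ln (surplus x d i).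

(* x is an optimal solution of max sum_i B_i log(sum_j x_ij - d_i) s.t. x >= 0,
   sum_i x_ij <= 1; the log is only finite on positive surpluses (it is -oo
   otherwise), so the optimum is taken over feasible x with positive surpluses. *)
Definition optimal (R : realType) (n m : nat) (B d : 'I_n -> R)
  (x : 'I_n -> 'I_m -> R) : Prop :=
  feasible x /\ (forall i, 0 < surplus x d i) /\
  (forall y : 'I_n -> 'I_m -> R, feasible y -> (forall i, 0 < surplus y d i) ->
     objective B d y <= objective B d x).

(* Main.v *)
Require Import Defs.
From HB Require Import structures.
From mathcomp Require Import all_boot all_order all_algebra.
From mathcomp Require Import reals exp.
From mathcomp Require Import ring lra.
Import Order.TTheory GRing.Theory Num.Theory.
Local Open Scope ring_scope.

Lemma ln_diff_ge (R : realType) (u v : R) : 0 < u -> 0 < v -> (u - v) / u <= ln u - ln v.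
Proof.
move=> hu hv.
have h : ln (1 + (v / u - 1)) <= v / u - 1.
  apply: le_ln1Dx. have : 0 < v / u by apply: divr_gt0. lra.
rewrite addrC subrK ln_div ?posrE // in h.
have -> : (u - v) / u = 1 - v / u by field; rewrite lt0r_neq0.
lra.
Qed.

Lemma sum_if1 (R : realType) n (k : 'I_n) (e : R) :
  \sum_(i < n) (if i == k then e else 0) = e.
Proof. by rewrite -big_mkcond big_pred1_eq. Qed.

Lemma key (R : realType) (n m : nat) (w d : 'I_n -> R) (hd : forall i, 0 <= d i)
  (hw : forall i, 0 < w i) (x : 'I_n -> 'I_m -> R) :
  optimal w d x -> forall i k, surplus x d i / w i <= surplus x d k / w k.
Proof.
move=> [[x0 xcol] [spos opt]] i k.
rewrite leNgt; apply/negP => hlt.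
have hik : i != k by apply/eqP => E; rewrite E ltxx in hlt.
have hki : k != i by rewrite eq_sym.
set si := surplus x d i in hlt *; set sk := surplus x d k in hlt *.
have hsi : 0 < si := spos i. have hsk : 0 < sk := spos k.
have hwi := hw i; have hwk := hw k.
set D := w k * si - w i * sk.
have hD : 0 < D.
  rewrite /D subr_gt0.
  rewrite ltr_pdivrMr // mulrAC ltr_pdivlMr // in hlt.
  lra.
have [j hj] : exists j, 0 < x i j.
  case: (pickP (fun j => 0 < x i j)) => [j hj|H]; first by exists j.
  have : \sum_(j < m) x i j <= 0.
    by apply: sumr_le0 => j _; rewrite leNgt H.
  have := hd i; rewrite /si /surplus in hsi; lra.
set e := Num.min (x i j) (Num.min (si / 2) (D / (2 * (w i + w k)))).
have he0 : 0 < e.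
  rewrite /e !lt_min hj /=; apply/andP; split; first lra.
  apply: divr_gt0 => //; lra.
have hexij : e <= x i j by rewrite /e ge_min lexx.
have hesi : e <= si / 2 by rewrite /e !ge_min lexx orbT.
have heD : e <= D / (2 * (w i + w k)) by rewrite /e !ge_min lexx !orbT.
pose t (i' : 'I_n) := (if i' == k then e else 0) - (if i' == i then e else 0).
pose y (i' : 'I_n) (j' : 'I_m) := x i' j' + (if j' == j then t i' else 0).
have sumt : \sum_(i' < n) t i' = 0 by rewrite sumrB !sum_if1 subrr.
have ti : t i = - e by rewrite /t eqxx (negbTE hik) sub0r.
have tk : t k = e by rewrite /t eqxx (negbTE hki) subr0.
have row : forall i', surplus y d i' = surplus x d i' + t i'.
  move=> i'; rewrite /surplus /y big_split /= sum_if1; lra.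
have yfeas : feasible y.
  split.
  - move=> i' j'; rewrite /y; case: (eqVneq j' j) => [->|ne]; last by rewrite addr0.
    have := x0 i' j; case: (eqVneq i' i) => [->|ne]; first by rewrite ti; lra.
    rewrite /t (negbTE ne) subr0; case: ifP => _; lra.
  - move=> j'; rewrite /y big_split /=; case: (eqVneq j' j) => [->|ne].
      by rewrite sumt addr0.
    by rewrite [X in _ + X]big1 // addr0.
have ypos : forall i', 0 < surplus y d i'.
  move=> i'; rewrite row; case: (eqVneq i' i) => [->|ne]; first by rewrite ti -/si; lra.
  have := spos i'; rewrite /t (negbTE ne) subr0; case: ifP => _; lra.
have := opt y yfeas ypos.
rewrite /objective.
rewrite (bigD1 i) //= [X in _ <= X](bigD1 i) //=.
rewrite (bigD1 k) //= [X in _ <= _ + X](bigD1 k) //=.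
have -> : \sum_(i0 < n | (i0 != i) && (i0 != k)) w i0 * ln (surplus y d i0) =
          \sum_(i0 < n | (i0 != i) && (i0 != k)) w i0 * ln (surplus x d i0).
  apply: eq_bigr => i' /andP [n1 n2]; rewrite row /t (negbTE n1) (negbTE n2) subrr addr0 //.
rewrite !row ti tk -/si -/sk.
have h1 := @ln_diff_ge R (si - e) si ltac:(lra) hsi.
have h2 := @ln_diff_ge R (sk + e) sk ltac:(lra) hsk.
have h3 : w i * ((si - e - si) / (si - e)) + w k * ((sk + e - sk) / (sk + e)) > 0.
  have -> : w i * ((si - e - si) / (si - e)) + w k * ((sk + e - sk) / (sk + e))
     = e * (w k * (si - e) - w i * (sk + e)) / ((si - e) * (sk + e)).
    by field; apply/andP; split; rewrite lt0r_neq0 //; lra.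
  apply: divr_gt0; last by apply: mulr_gt0; lra.
  apply: mulr_gt0 => //.
  have : e * (2 * (w i + w k)) <= D by rewrite -ler_pdivlMr //; lra.
  rewrite /D; nra.
have h4 : w i * ((si - e - si) / (si - e)) <= w i * (ln (si - e) - ln si).
  by rewrite ler_pM2l.
have h5 : w k * ((sk + e - sk) / (sk + e)) <= w k * (ln (sk + e) - ln sk).
  by rewrite ler_pM2l.
lra.
Qed.

Theorem proposition1 (R : realType) (n m : nat) (d : 'I_n -> R)
  (hd : forall i, 0 <= d i)
  (hstrict : exists x0 : 'I_n -> 'I_m -> R, feasible x0 /\ forall i, 0 < surplus x0 d i) :
  (forall x : 'I_n -> 'I_m -> R, optimal (fun _ => 1) d x ->
     forall i k, surplus x d i = surplus x d k) /\
  ((forall i, 0 < d i) ->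
   forall x : 'I_n -> 'I_m -> R, optimal d d x ->
     forall i k, (\sum_(j < m) x i j) / d i = (\sum_(j < m) x k j) / d k).
Proof.
split.
  move=> x ho i k.
  have h1 := @key R n m (fun _ => 1) d hd (fun _ => ltr01) x ho i k.
  have h2 := @key R n m (fun _ => 1) d hd (fun _ => ltr01) x ho k i.
  rewrite !divr1 in h1 h2; apply/eqP; rewrite eq_le h1 h2 //.
move=> hdp x ho i k.
have h1 := @key R n m d d hd hdp x ho i k.
have h2 := @key R n m d d hd hdp x ho k i.
have E : surplus x d i / d i = surplus x d k / d k by apply/eqP; rewrite eq_le h1 h2.
have F : forall l, (\sum_(j < m) x l j) / d l = surplus x d l / d l + 1.
  move=> l; rewrite /surplus; field; exact: lt0r_neq0.
by rewrite !F E.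
Qed.
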